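(* Let $\kappa_2$ be an infinite regular cardinal. If there exists an $(\aleph_0,\kappa_2)$-peculiar cut in ${}^\omega\omega$, then $\mathrm{cov}(\mathcal M)\le\kappa_2$.
   Context: $\mathrm{cov}(\mathcal M)$ is the least number of meagre subsets of the real line (equivalently of ${}^\omega2$) needed to cover it. For $f,g\in{}^\omega\omega$: $f\le^*g$ iff $f(n)\le g(n)$ for all but finitely many $n$; $f<^*g$ iff $f(n)<g(n)$ for all but finitely many $n$. For infinite regular cardinals $\kappa_1,\kappa_2$, a $(\kappa_1,\kappa_2)$-peculiar cut in ${}^\omega\omega$ is a pair $(\langle f_i:i<\kappa_1\rangle,\langle f^\alpha:\alpha<\kappa_2\rangle)$ of sequences in ${}^\omega\omega$ such that: ($\alpha$) $f_j<^*f_i$ for $i<j<\kappa_1$; ($\beta$) $f^\alpha<^*f^\beta$ for $\alpha<\beta<\kappa_2$; ($\gamma$) $f^\alpha<^*f_i$ for all $i<\kappa_1$, $\alpha<\kappa_2$; ($\delta$) if $f\in{}^\omega\omega$ and $f\le^*f_i$ for all $i<\kappa_1$, then $f\le^*f^\alpha$ for some $\alpha<\kappa_2$; ($\varepsilon$) if $f\in{}^\omega\omega$ and $f^\alpha\le^*f$ for all $\alpha<\kappa_2$, then $f_i\le^*f$ for some $i<\kappa_1$. *)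

(* Defs.v *)
From HB Require Import structures.
From mathcomp Require Import all_boot all_order all_algebra.
From mathcomp Require Import boolp classical_sets functions cardinality.
From mathcomp Require Import topology cantor.

Set Implicit Arguments.
Unset Strict Implicit.
Unset Printing Implicit Defensive.

Local Open Scope classical_set_scope.

Definition le_star (f g : nat -> nat) : Prop :=
  exists N : nat, forall n : nat, (N <= n)%N -> (f n <= g n)%N.

Definition lt_star (f g : nat -> nat) : Prop :=
  exists N : nat, forall n : nat, (N <= n)%N -> (f n < g n)%N.

(* ---------- infinite regular cardinals ----------
   An infinite regular cardinal kappa is represented by a type K together with
   a strict well-order [lt] on K whose order type is kappa, i.e. K "is" the set
   of ordinals below kappa.  The conditions say: [lt] is a strict well-order,
   K is infinite, every proper initial segment has strictly smaller cardinality
   (so the order type is an initial ordinal = a cardinal), and every unbounded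
   (cofinal) subset has the full cardinality (cf(kappa) = kappa: regularity). *)
Definition strict_well_order (K : Type) (lt : K -> K -> Prop) : Prop :=
  [/\ (forall a, ~ lt a a),
      (forall a b c, lt a b -> lt b c -> lt a c),
      (forall a b, [\/ lt a b, a = b | lt b a]) &
      well_founded lt].

Definition infinite_regular_cardinal (K : Type) (lt : K -> K -> Prop) : Prop :=
  [/\ strict_well_order lt,
      ~ finite_set [set: K],
      (forall a : K, ~ ([set: K] #<= [set b | lt b a])%card) &
      (forall S : set K, (forall a : K, exists2 b, S b & ~ lt b a) ->
         ([set: K] #<= S)%card)].

Definition peculiar_cut (K1 : Type) (lt1 : K1 -> K1 -> Prop)
  (K2 : Type) (lt2 : K2 -> K2 -> Prop)
  (flow : K1 -> nat -> nat) (fup : K2 -> nat -> nat) : Prop :=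
  [/\ (* alpha *) (forall i j : K1, lt1 i j -> lt_star (flow j) (flow i)),
      (* beta *)  (forall a b : K2, lt2 a b -> lt_star (fup a) (fup b)),
      (* gamma *) (forall (i : K1) (a : K2), lt_star (fup a) (flow i)),
      (* delta *) (forall f : nat -> nat, (forall i : K1, le_star f (flow i)) ->
                      exists a : K2, le_star f (fup a)) &
      (* epsilon *) (forall f : nat -> nat, (forall a : K2, le_star (fup a) f) ->
                      exists i : K1, le_star (flow i) f)].

Definition peculiar_cut_aleph0 (K2 : Type) (lt2 : K2 -> K2 -> Prop)
  (flow : nat -> nat -> nat) (fup : K2 -> nat -> nat) : Prop :=
  peculiar_cut (fun i j : nat => (i < j)%N) lt2 flow fup.

Definition nowhere_dense (A : set cantor_space) : Prop :=
  (closure A)° = set0.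

Definition meagre (A : set cantor_space) : Prop :=
  exists N : nat -> set cantor_space,
    (forall n, nowhere_dense (N n)) /\ A `<=` \bigcup_n N n.

Definition covM_le (K : Type) (A : set K) : Prop :=
  exists F : set (set cantor_space),
    [/\ (forall X, F X -> meagre X),
        (F #<= A)%card &
        \bigcup_(X in F) X = [set: cantor_space]].

(* Main.v *)
Require Import Defs.
From HB Require Import structures.
From mathcomp Require Import all_boot all_order all_algebra.
From mathcomp Require Import boolp classical_sets functions cardinality.
From mathcomp Require Import mathcomp_extra topology cantor.
Local Open Scope classical_set_scope.
Lemma prefix_nbhs (y : cantor_space) (n : nat) :
  nbhs y [set z : cantor_space | forall i, (i < n)%N -> y i = z i].
Proof.
elim: n => [|n IH].
  by apply: (@nearW _ _ _ (nbhs_filter y)) => z i; rewrite ltn0.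
have H2 : nbhs y (proj n @^-1` [set y n] : set cantor_space).
  apply: (@proj_continuous nat (fun _ => bool) n y).
  apply: open_nbhs_nbhs; split => //; exact: discrete_open.
have H3 := @filterI _ _ (nbhs_filter y) _ _ IH H2.
apply: (@filterS _ _ (nbhs_filter y) _ _ _ H3) => z [Hz Hn] i.
rewrite ltnS leq_eqVlt => /predU1P[->|Hi].
  by rewrite -Hn.
exact: Hz.
Qed.

Lemma approx_cvg (x t : cantor_space) :
  ((fun L : nat => (fun i => if (i < L)%N then x i else t i) : cantor_space) @ \oo --> x).
Proof.
apply/pointwise_cvgP => i.
apply: cvg_near_cst; exists i.+1 => // L /= HL.
by rewrite HL.
Qed.

Fixpoint glow (flow : nat -> nat -> nat) (k m : nat) : nat :=
  if k is k'.+1 then minn (glow flow k' m) (flow k'.+1 m) else flow 0 m.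

Fixpoint cnt (x : nat -> bool) (m : nat) : nat :=
  if m is m'.+1 then (cnt x m' + x m')%N else 0%N.

Definition Phi flow (x : nat -> bool) (m : nat) := glow flow (cnt x m) m.

Lemma glow_anti flow k k' m : (k <= k')%N -> (glow flow k' m <= glow flow k m)%N.
Proof.
elim: k' => [|k' IH]; first by rewrite leqn0 => /eqP ->.
rewrite leq_eqVlt => /predU1P[-> //|]; rewrite ltnS => /IH.
by apply: leq_trans; rewrite /= geq_minl.
Qed.

Lemma glow_le flow k m : (glow flow k m <= flow k m)%N.
Proof. by case: k => //= k; rewrite geq_minr. Qed.

Lemma cnt_prefix (y z : nat -> bool) m :
  (forall i, (i < m)%N -> y i = z i) -> cnt z m = cnt y m.
Proof.
elim: m => [//|m IH] H /=; rewrite IH ?H //.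
by move=> i Hi; apply: H; apply: ltnW.
Qed.

Lemma cnt_mono (x : nat -> bool) M d : (cnt x M <= cnt x (M + d))%N.
Proof.
elim: d => [|d IH]; first by rewrite addn0.
by rewrite addnS /=; apply: leq_trans IH _; rewrite leq_addr.
Qed.

Lemma cnt_mono' (x : nat -> bool) M m : (M <= m)%N -> (cnt x M <= cnt x m)%N.
Proof. by move=> H; rewrite -(subnKC H); apply: cnt_mono. Qed.

Lemma cnt_tail (y : nat -> bool) L d :
  (forall i, (L <= i)%N -> y i = false) -> cnt y (L + d) = cnt y L.
Proof.
move=> H; elim: d => [|d IH]; first by rewrite addn0.
by rewrite addnS /= IH H ?addn0 // leq_addr.
Qed.

Definition Aset flow (fa : nat -> nat) N :=
  [set z : cantor_space | forall m, (N <= m)%N -> (Phi flow z m <= fa m)%N].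
Definition Zset N := [set z : cantor_space | forall m, (N <= m)%N -> z m = false].

Lemma nd_A flow (fa : nat -> nat) N :
  (forall k, exists M, forall m, (M <= m)%N -> (fa m < glow flow k m)%N) ->
  nowhere_dense (Aset flow fa N).
Proof.
move=> Hg; rewrite /nowhere_dense; apply/seteqP; split => [x Hx|//].
have := approx_cvg x (fun _ => false) _ Hx.
move=> [L0 _ HL0].
pose y : cantor_space := fun i => if (i < L0)%N then x i else false.
have Hy : closure (Aset flow fa N) y by apply: HL0; rewrite /= leqnn.
have [M HM] := Hg (cnt x L0).
pose m := maxn (maxn L0 N) M.
have HL0m : (L0 <= m)%N by rewrite /m !leq_max leqnn.
have HNm : (N <= m)%N by rewrite /m !leq_max leqnn orbT.
have HMm : (M <= m)%N by rewrite /m !leq_max leqnn orbT.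
have cy : cnt y m = cnt x L0.
  rewrite -(subnKC HL0m) cnt_tail.
    by apply: cnt_prefix => i Hi; rewrite /y Hi.
  by move=> i Hi; rewrite /y ltnNge Hi.
have [z [Az Pz]] := Hy _ (prefix_nbhs y m).
have := Az m HNm; rewrite /Phi (cnt_prefix _ _ _ Pz) cy.
by rewrite leqNgt HM.
Qed.

Lemma nd_Z N : nowhere_dense (Zset N).
Proof.
rewrite /nowhere_dense; apply/seteqP; split => [x Hx|//].
have := approx_cvg x (fun _ => true) _ Hx.
move=> [L0 _ HL0].
pose L := maxn L0 N.
pose y : cantor_space := fun i => if (i < L)%N then x i else true.
have Hy : closure (Zset N) y by apply: HL0; rewrite /= leq_maxl.
have [z [Zz Pz]] := Hy _ (prefix_nbhs y L.+1).
have := Zz L (leq_maxr _ _).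
by rewrite -Pz // /y ltnn.
Qed.


Lemma glow_gt flow (fa : nat -> nat) :
  (forall i, lt_star fa (flow i)) ->
  forall k, exists M, forall m, (M <= m)%N -> (fa m < glow flow k m)%N.
Proof.
move=> H; elim => [|k [M HM]]; first exact: H.
have [M' HM'] := H k.+1.
exists (maxn M M') => m Hm /=.
rewrite leq_min HM ?HM' //.
  exact: leq_trans (leq_maxr _ _) Hm.
exact: leq_trans (leq_maxl _ _) Hm.
Qed.

Definition Nset flow (fa : nat -> nat) n :=
  if odd n then Zset n./2 else Aset flow fa n./2.

Theorem corollary3p2 (K2 : Type) (lt2 : K2 -> K2 -> Prop) :
  infinite_regular_cardinal lt2 ->
  (exists (flow : nat -> nat -> nat) (fup : K2 -> nat -> nat),
      peculiar_cut_aleph0 lt2 flow fup) ->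
  covM_le [set: K2].
Proof.
move=> _ [flow [fup [Ha Hb Hc Hd He]]].
have [a0 _] : exists a : K2, le_star (fun _ => 0%N) (fup a).
  by apply: Hd => i; exists 0%N.
pose Mset a := \bigcup_n Nset flow (fup a) n.
exists (range Mset); split.
- move=> X [a _ <-]; exists (Nset flow (fup a)); split => // n.
  rewrite /Nset; case: ifP => _; first exact: nd_Z.
  by apply: nd_A; apply: glow_gt => i; apply: Hc.
- exact: card_image_le.
- apply/seteqP; split => // x _.
  have [[N HN]|nZ] := pselect (exists N, forall m, (N <= m)%N -> x m = false).
    exists (Mset a0); first by exists a0.
    exists N.*2.+1 => //; rewrite /Nset /= odd_double /=.
    by rewrite uphalf_double.
  have Hinf : forall N, exists m, (N <= m)%N /\ x m = true.
    move=> N; apply: contrapT => H; apply: nZ; exists N => m Hm.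
    by apply/negbTE/negP => Hx; apply: H; exists m.
  have Hcnt : forall n, exists M, (n <= cnt x M)%N.
    elim => [|n [M HM]]; first by exists 0%N.
    have [m [Hm Hx]] := Hinf M.
    exists m.+1 => /=; rewrite Hx addn1 ltnS.
    exact: leq_trans HM (cnt_mono' _ _ _ Hm).
  have [a [N HN]] : exists a, le_star (Phi flow x) (fup a).
    apply: Hd => n; have [M HM] := Hcnt n; exists M => m Hm.
    apply: leq_trans (glow_le _ _ _); apply: glow_anti.
    exact: leq_trans HM (cnt_mono' _ _ _ Hm).
  exists (Mset a); first by exists a.
  exists N.*2 => //; rewrite /Nset odd_double half_double.
  exact: HN.
Qed.
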